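(* Let $m$ be a positive integer, $I=\{m\}$, and $\rho_m=\frac{m}{e}\,(me)^{1/m}$. Then every complex root of $d(I;z)$ lies in the union of the discs $\mathcal D_k=\{z\in\mathbb C\mid |z-k|\le\rho_m\}$ for $k=0,1,\dots,m-1$.
   Context: $d(I;z)$ is the descent polynomial: the unique polynomial whose value at each integer $n>\max(I\cup\{0\})$ is the number of permutations $\pi\in\mathfrak S_n$ with $\{j\mid\pi_j>\pi_{j+1}\}=I$, evaluated at complex $z$. For $I=\{m\}$, $d(I;z)=\binom{z}{m}-1$. *)

(* Defs.v *)
From Stdlib Require Import Reals Arith Factorial.
Open Scope R_scope.

Record Cplx : Type := mkC { Re : R ; Im : R }.

Definition Cadd (z w : Cplx) : Cplx := mkC (Re z + Re w) (Im z + Im w).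
Definition Csub (z w : Cplx) : Cplx := mkC (Re z - Re w) (Im z - Im w).
Definition Cmul (z w : Cplx) : Cplx :=
  mkC (Re z * Re w - Im z * Im w) (Re z * Im w + Im z * Re w).
Definition Cscale (r : R) (z : Cplx) : Cplx := mkC (r * Re z) (r * Im z).
Definition Cof_R (r : R) : Cplx := mkC r 0.
Definition C0 : Cplx := Cof_R 0.
Definition C1 : Cplx := Cof_R 1.
Definition Cmod (z : Cplx) : R := sqrt (Re z ^ 2 + Im z ^ 2).

Fixpoint Cfalling (z : Cplx) (m : nat) : Cplx :=
  match m with
  | O => C1
  | S k => Cmul (Cfalling z k) (Csub z (Cof_R (INR k)))
  end.

Definition Cbinom (z : Cplx) (m : nat) : Cplx :=
  Cscale (/ INR (fact m)) (Cfalling z m).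

(* descent polynomial for I = {m}:  d({m}; z) = binom(z, m) - 1 *)
Definition desc_poly_single (m : nat) (z : Cplx) : Cplx :=
  Csub (Cbinom z m) C1.

Definition rho (m : nat) : R :=
  (INR m / exp 1) * Rpower (INR m * exp 1) (/ INR m).

(* Main.v *)
Require Import Defs.
From Stdlib Require Import Reals Arith Factorial Lra Lia Classical.
Open Scope R_scope.

Lemma exp_mul_pow (n : nat) (y : R) : exp (INR n * y) = exp y ^ n.
Proof.
  induction n as [|n IH].
  - simpl. rewrite Rmult_0_l, exp_0; reflexivity.
  - rewrite S_INR, Rmult_plus_distr_r, exp_plus, IH, Rmult_1_l; simpl; ring.
Qed.

Lemma key_ineq (m : nat) : (1 <= m)%nat ->
  exp 1 * INR m ^ (S m) <= INR (S m) ^ (S m).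
Proof.
  intros Hm.
  assert (Hm1 : 1 <= INR m) by (apply (le_INR 1); exact Hm).
  rewrite S_INR.
  set (y := / (INR m + 1)).
  assert (Hy : 0 < y) by (unfold y; apply Rinv_0_lt_compat; lra).
  assert (Hy1 : y * (INR m + 1) = 1) by (unfold y; field; lra).
  assert (H1 : 1 - y <= exp (- y)) by (generalize (exp_ineq1_le (- y)); lra).
  rewrite exp_Ropp in H1.
  assert (Hey : 0 < exp y) by apply exp_pos.
  assert (H2 : exp y * INR m <= INR m + 1).
  { assert (H3 : (1 - y) * exp y <= 1).
    { apply Rmult_le_reg_r with (/ exp y). apply Rinv_0_lt_compat; lra.
      rewrite Rmult_assoc, Rinv_r by lra. lra. }
    assert (H4 : 1 - y = INR m * y) by (unfold y; field; lra).
    rewrite H4 in H3.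
    apply Rmult_le_reg_r with y; [lra|].
    replace ((INR m + 1) * y) with 1 by lra. nra. }
  assert (He : exp 1 = exp y ^ (S m)).
  { rewrite <- exp_mul_pow, S_INR, Rmult_comm, Hy1; reflexivity. }
  rewrite He, <- Rpow_mult_distr.
  apply pow_incr. split; [|exact H2].
  apply Rmult_le_pos; lra.
Qed.

Lemma fact_bound (m : nat) : (1 <= m)%nat ->
  INR (fact m) * exp 1 ^ m <= INR m ^ (S m) * exp 1.
Proof.
  induction m as [|m IH]; intros Hm; [lia|].
  destruct (Nat.eq_dec m 0) as [->|Hm0].
  - simpl. lra.
  - assert (IH' := IH ltac:(lia)).
    assert (K := key_ineq m ltac:(lia)).
    change (fact (S m)) with (S m * fact m)%nat.
    rewrite mult_INR.
    assert (Hpos : 0 < INR (S m)) by (apply lt_0_INR; lia).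
    assert (He : 0 < exp 1) by apply exp_pos.
    replace (INR (S m) * INR (fact m) * exp 1 ^ S m)
      with (INR (S m) * exp 1 * (INR (fact m) * exp 1 ^ m)) by (simpl; ring).
    apply Rle_trans with (INR (S m) * exp 1 * (INR m ^ S m * exp 1)).
    + apply Rmult_le_compat_l; [nra|exact IH'].
    + replace (INR (S m) * exp 1 * (INR m ^ S m * exp 1))
        with (INR (S m) * exp 1 * (exp 1 * INR m ^ S m)) by ring.
      replace (INR (S m) ^ S (S m) * exp 1)
        with (INR (S m) * exp 1 * INR (S m) ^ S m) by (simpl; ring).
      apply Rmult_le_compat_l; [nra|exact K].
Qed.

Lemma Cmod_mul (z w : Cplx) : Cmod (Cmul z w) = Cmod z * Cmod w.
Proof.
  unfold Cmod, Cmul; simpl.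
  rewrite <- sqrt_mult by nra.
  f_equal; ring.
Qed.

Lemma Cmod_pos (z : Cplx) : 0 <= Cmod z.
Proof. apply sqrt_pos. Qed.

Lemma falling_bound (z : Cplx) (r : R) (n : nat) : 0 < r ->
  (forall k, (k < n)%nat -> r < Cmod (Csub z (Cof_R (INR k)))) ->
  r ^ n <= Cmod (Cfalling z n).
Proof.
  intros Hr; induction n as [|n IH]; intros H.
  - simpl. unfold Cmod, C1, Cof_R; simpl.
    replace (1 * (1 * 1) + 0 * (0 * 1)) with 1 by ring. rewrite sqrt_1; lra.
  - simpl. rewrite Cmod_mul.
    assert (A := IH (fun k Hk => H k ltac:(lia))).
    assert (B := H n ltac:(lia)).
    assert (0 < r ^ n) by (apply pow_lt; lra).
    rewrite Rmult_comm. apply Rmult_le_compat; lra.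
Qed.

Theorem theorem4p8 (m : nat) (Hm : (0 < m)%nat) (z : Cplx) :
  desc_poly_single m z = C0 ->
  exists k : nat, (k < m)%nat /\ Cmod (Csub z (Cof_R (INR k))) <= rho m.
Proof.
  intros Hd.
  assert (Hf : Cmod (Cfalling z m) = INR (fact m)).
  { unfold desc_poly_single, Cbinom, Csub, Cscale, C0, C1, Cof_R in Hd.
    injection Hd; intros Him Hre.
    assert (Hf0 : 0 < INR (fact m)) by (apply lt_0_INR; apply lt_O_fact).
    assert (R1 : Re (Cfalling z m) = INR (fact m)).
    { apply Rmult_eq_reg_l with (/ INR (fact m)).
      rewrite Rinv_l by lra. lra. apply Rinv_neq_0_compat; lra. }
    assert (I1 : Im (Cfalling z m) = 0).
    { apply Rmult_eq_reg_l with (/ INR (fact m)).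
      rewrite Rmult_0_r. lra. apply Rinv_neq_0_compat; lra. }
    unfold Cmod. rewrite R1, I1.
    replace (INR (fact m) ^ 2 + 0 ^ 2) with (INR (fact m) ^ 2) by ring.
    apply sqrt_pow2; lra. }
  assert (Hm1 : 1 <= INR m) by (apply (le_INR 1); exact Hm).
  assert (He : 0 < exp 1) by apply exp_pos.
  set (Q := Rpower (INR m * exp 1) (/ INR m)).
  assert (HQ : Q ^ m = INR m * exp 1).
  { unfold Q. rewrite <- Rpower_pow by (unfold Rpower; apply exp_pos).
    rewrite Rpower_mult, Rinv_l by lra. apply Rpower_1; nra. }
  assert (HQp : 0 < Q) by (unfold Q, Rpower; apply exp_pos).
  assert (Hrho : rho m = INR m / exp 1 * Q) by reflexivity.
  assert (Hrp : 0 < rho m).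
  { rewrite Hrho. apply Rmult_lt_0_compat; [|lra].
    unfold Rdiv; apply Rmult_lt_0_compat; [lra|apply Rinv_0_lt_compat; lra]. }
  destruct (Classical_Prop.classic
    (exists k : nat, (k < m)%nat /\ Cmod (Csub z (Cof_R (INR k))) <= rho m))
    as [H|H]; [exact H|exfalso].
  assert (Hall : forall k, (k < m)%nat -> rho m < Cmod (Csub z (Cof_R (INR k)))).
  { intros k Hk. apply Rnot_le_lt. intro Hc. apply H. exists k. split; assumption. }
  destruct m as [|m']; [lia|].
  assert (Hlow : rho (S m') ^ m' <= Cmod (Cfalling z m')).
  { apply falling_bound; [exact Hrp|]. intros k Hk; apply Hall; lia. }
  assert (Hlast := Hall m' ltac:(lia)).
  assert (Hstrict : rho (S m') ^ S m' < INR (fact (S m'))).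
  { rewrite <- Hf. simpl. rewrite Cmod_mul.
    assert (0 < rho (S m') ^ m') by (apply pow_lt; lra).
    rewrite (Rmult_comm (rho (S m'))).
    apply Rle_lt_trans with (Cmod (Cfalling z m') * rho (S m')).
    - apply Rmult_le_compat_r; lra.
    - apply Rmult_lt_compat_l; [lra|exact Hlast]. }
  assert (Hrpow : rho (S m') ^ S m' * exp 1 ^ S m' = INR (S m') ^ S m' * (INR (S m') * exp 1)).
  { rewrite Hrho, <- Rpow_mult_distr, Rpow_mult_distr, <- HQ, <- !Rpow_mult_distr.
    f_equal. field. lra. }
  assert (FB := fact_bound (S m') ltac:(lia)).
  assert (0 < exp 1 ^ S m') by (apply pow_lt; lra).
  assert (rho (S m') ^ S m' * exp 1 ^ S m' < INR (fact (S m')) * exp 1 ^ S m')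
    by (apply Rmult_lt_compat_r; lra).
  assert (INR (S m') ^ S (S m') * exp 1 = INR (S m') ^ S m' * (INR (S m') * exp 1))
    by (simpl; ring).
  lra.
Qed.
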